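(* Let $m\ge 3$, $H=B(l_1,\ldots,l_m)$ and $G=H^2$. Then $G$ is equitably $(m+2)$-choosable.
   Context: All graphs are finite and simple. For $m,l_1,\ldots,l_m\in\mathbb{N}$ with $l_1\le\cdots\le l_m$, $B(l_1,\ldots,l_m)$ is the graph with vertex set $\{u\}\cup\{v_{i,j}: i\in[m], j\in[l_i]\}$ in which, for each $i\in[m]$, consecutive vertices in the sequence $u, v_{i,1},\ldots,v_{i,l_i}$ are adjacent (and there are no other edges). For a graph $H$, $H^2$ has vertex set $V(H)$ with two vertices adjacent iff their distance in $H$ is 1 or 2. A $k$-assignment $L$ assigns to each vertex a set of exactly $k$ colors; an equitable $L$-coloring of $G$ is a proper coloring $f$ with $f(v)\in L(v)$ such that no color is used more than $\lceil |V(G)|/k\rceil$ times; $G$ is equitably $k$-choosable if it has an equitable $L$-coloring for every $k$-assignment $L$. *)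

(* Defs.v *)
From mathcomp Require Import all_boot.
Set Implicit Arguments. Unset Strict Implicit. Unset Printing Implicit Defensive.

(* Vertex type of the spider B(l_1,...,l_m): [None] is the centre u,
   [Some (Tagged _ i j)] (with j : 'I_(l i), 0-indexed) is v_{i, j+1}. *)
Definition spider_vertex (m : nat) (l : 'I_m -> nat) : finType :=
  option {i : 'I_m & 'I_(l i)}.

Definition spider_next m (l : 'I_m -> nat) (x y : spider_vertex l) : bool :=
  match x, y with
  | None, Some (existT i j) => nat_of_ord j == 0
  | Some (existT i j), Some (existT i' j') => (i == i') && (j.+1 == j')
  | _, _ => false
  end.

Definition spider_adj m (l : 'I_m -> nat) : rel (spider_vertex l) :=
  fun x y => spider_next x y || spider_next y x.

Definition graph_square (T : finType) (e : rel T) : rel T :=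
  fun x y => (x != y) && (e x y || [exists z, e x z && e z y]).

Definition ceil_div (n k : nat) : nat := (n + k.-1) %/ k.

Definition k_assignment (T : finType) (k : nat) (L : T -> seq nat) : Prop :=
  forall v, uniq (L v) /\ size (L v) = k.

Definition equitable_L_coloring (T : finType) (e : rel T) (k : nat)
    (L : T -> seq nat) (f : T -> nat) : Prop :=
  (forall v, f v \in L v) /\
  (forall x y, e x y -> f x != f y) /\
  (forall c : nat, #|[set v | f v == c]| <= ceil_div #|T| k).

Definition equitably_choosable (T : finType) (e : rel T) (k : nat) : Prop :=
  forall L : T -> seq nat, k_assignment k L ->
    exists f : T -> nat, equitable_L_coloring e k L f.

(* Main.v *)
Require Import Defs.
From mathcomp Require Import all_boot.
From mathcomp Require Import zify.
Set Implicit Arguments. Unset Strict Implicit. Unset Printing Implicit Defensive.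

Lemma exists_fresh (s t : seq nat) : uniq s -> size t < size s ->
  exists2 c, c \in s & c \notin t.
Proof.
move=> us lt; case: (boolP (has (fun c => c \notin t) s)) => [/hasP [c cs ct]|/hasPn H].
  by exists c.
have : size s <= size t.
  apply: uniq_leq_size us _ => c /H; by rewrite negbK.
by rewrite leqNgt lt.
Qed.

Lemma card_le_inj (T : finType) (A : {pred T}) (g : T -> nat) (s : seq nat) :
  {in A &, injective g} -> (forall x, x \in A -> g x \in s) -> #|A| <= size s.
Proof.
move=> ginj gs.
have u : uniq (map g (enum A)).
  rewrite map_inj_in_uniq ?enum_uniq // => x y; rewrite !mem_enum; exact: ginj.
rewrite cardE -(size_map g); apply: uniq_leq_size u _ => y /mapP [x].
by rewrite mem_enum => xA ->; exact: gs.
Qed.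

Section Greedy.
Variables (T : finType) (e : rel T) (k q : nat) (L : T -> seq nat).
Hypothesis esym : symmetric e.
Hypothesis eirr : irreflexive e.
Hypothesis kL : k_assignment k L.
Variables (b : T -> nat) (r : T -> nat).
Hypothesis r_inj : injective r.
Hypothesis hb : forall v, b v < q.
Hypothesis hc : forall v, #|[set w | (r w < r v) && (e v w || (b w == b v))]| < k.

Definition conflict v w := (r w < r v) && (e v w || (b w == b v)).

Lemma greedy_step N : exists f : T -> nat,
  (forall v, r v < N -> f v \in L v) /\
  (forall v w, r v < N -> conflict v w -> f v != f w).
Proof.
elim: N => [|N [f [fL fC]]]; first by exists (fun _ => 0); split.
case: (pickP (fun v => r v == N)) => [v0 /eqP rv0|none]; last first.
  exists f; split=> [v|v w] rv; [apply: fL| apply: fC];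
  by rewrite ltn_neqAle -ltnS rv andbT; apply/negP => /eqP E; have := none v; rewrite E eqxx.
pose F := [seq f w | w <- enum [set w | conflict v0 w]].
have [c cL cF] : exists2 c, c \in L v0 & c \notin F.
  apply: exists_fresh; first by case: (kL v0).
  by rewrite size_map -cardE; case: (kL v0) => _ ->; exact: hc.
have rvN : forall v, r v < N.+1 -> v != v0 -> r v < N.
  move=> v rv nv; rewrite ltn_neqAle -ltnS rv andbT; apply/eqP => E.
  by move/eqP: nv; apply; apply: r_inj; rewrite E rv0.
exists (fun x => if x == v0 then c else f x); split=> [v|v w] rv.
  by case: eqP => [->|/eqP nv] //; apply: fL; exact: rvN.
move=> cvw; have rw : r w < r v by case/andP: cvw.
have wv0 : w != v0 by apply/eqP=> E; move: rw; rewrite E rv0 ltnNge -ltnS rv.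
rewrite (negbTE wv0); case: (v =P v0) => [E|/eqP nv].
  move: cvw; rewrite E => cvw; apply/negP => /eqP E2; move: cF; rewrite E2; apply/negP/negPn.
  by apply: map_f; rewrite mem_enum inE.
by apply: fC => //; exact: rvN.
Qed.

Lemma greedy : exists f : T -> nat,
  (forall v, f v \in L v) /\ (forall x y, e x y -> f x != f y) /\
  (forall c, #|[set v | f v == c]| <= q).
Proof.
have [f [fL fC]] := greedy_step (\max_(v : T) r v).+1.
have rlt v : r v < (\max_(v : T) r v).+1 by rewrite ltnS; apply: leq_bigmax.
have key x y : x != y -> e x y || (b x == b y) -> f x != f y.
  move=> nxy exy; case: (ltngtP (r x) (r y)) => [lt|lt|eq].
  - rewrite eq_sym; apply: fC => //; rewrite /conflict lt /=.
    by rewrite (esym y x).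
  - by apply: fC => //; rewrite /conflict lt /= (eq_sym (b y)).
  - by move: nxy; rewrite (r_inj eq) eqxx.
exists f; split; first by move=> v; apply: fL.
split.
  move=> x y exy; apply: key; last by rewrite exy.
  by apply/eqP => E; move: exy; rewrite E eirr.
move=> c; rewrite -(size_iota 0 q); apply: (@card_le_inj _ _ b) => [x y|x].
  rewrite !inE => /eqP fx /eqP fy bxy; apply/eqP; apply/negPn/negP => nxy.
  by have := key x y nxy; rewrite bxy eqxx orbT fx fy eqxx => /(_ isT).
by rewrite mem_iota add0n hb.
Qed.
End Greedy.
Section Spider.
Variables (m : nat) (l : 'I_m -> nat).
Hypothesis hm : 3 <= m.
Hypothesis hsorted : forall i j : 'I_m, i <= j -> l i <= l j.

Local Notation T := (spider_vertex l).
Local Notation adj := (@spider_adj m l).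

Definition dep (p : {i : 'I_m & 'I_(l i)}) : nat := tagged p.
Definition leg (p : {i : 'I_m & 'I_(l i)}) : 'I_m := tag p.
Definition Spre (a : 'I_m) := \sum_(i < m | i < a) l i.
Definition beta (v : T) := if v is Some p then (Spre (leg p) + dep p).+1 else 0.

Lemma sig_eq p p' : leg p = leg p' -> dep p = dep p' -> p = p'.
Proof.
case: p => [i j]; case: p' => [i' j']; rewrite /leg /= => E; subst i'.
by rewrite /dep /= => /val_inj ->.
Qed.

Lemma dep_lt p : dep p < l (leg p).
Proof. exact: ltn_ord. Qed.

Lemma S_mono (a c : 'I_m) : a < c -> Spre a + l a <= Spre c.
Proof.
move=> ac; rewrite /Spre [X in _ <= X](bigD1 a) //= addnC leq_add2l.
apply: (sub_le_big leqnn (fun x y => leq_addr y x)) => i ia.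
by rewrite (ltn_trans ia ac) /=; apply/eqP => E; move: ia; rewrite E ltnn.
Qed.

Lemma S_bound (a : 'I_m) : Spre a + l a <= \sum_(i < m) l i.
Proof.
rewrite /Spre [X in _ <= X](bigD1 a) //= addnC leq_add2l.
apply: (sub_le_big leqnn (fun x y => leq_addr y x)) => i ia.
by apply/eqP => E; move: ia; rewrite E ltnn.
Qed.

Lemma S_le2 (a : 'I_m) : (forall i : 'I_m, i < a -> l i <= 2) -> Spre a <= 2 * a.
Proof.
move=> H; rewrite /Spre (@leq_trans (\sum_(i < m | i < a) 2)) //.
  by apply: leq_sum => i; exact: H.
rewrite big_const iter_addn_0 leq_mul2l /=.
rewrite -[X in _ <= X](size_iota 0 a); apply: (@card_le_inj _ _ val) => [x y _ _|x].
  exact: val_inj.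
rewrite mem_iota add0n unfold_in /= => /eqnP; lia.
Qed.

Lemma adjE x y : adj x y -> match x, y with
 | None, None => False
 | None, Some p => dep p = 0
 | Some p, None => dep p = 0
 | Some p, Some p' => leg p = leg p' /\ (dep p' = (dep p).+1 \/ dep p = (dep p').+1)
 end.
Proof.
rewrite /spider_adj /spider_next.
case: x => [[i j]|]; case: y => [[i' j']|] //=; rewrite /dep /leg /=.
- by case/orP => /andP [/eqP E /eqP F]; (split; [by rewrite E | lia]).
- by rewrite ?orbF => /eqP.
- by rewrite ?orbF => /eqP.
Qed.

Lemma nbr_tail p y : 0 < dep p -> graph_square adj (Some p) y ->
  (y = None /\ dep p = 1) \/ exists2 p', y = Some p' &
    leg p' = leg p /\ (dep p' + 1 = dep p \/ dep p' + 2 = dep p \/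
                       dep p' = dep p + 1 \/ dep p' = dep p + 2).
Proof.
rewrite /graph_square => dp /andP [ne /orP [a | /existsP [z /andP [a1 a2]]]].
  case: y ne a => [p'|] ne /adjE; last by move=> E; move: dp; rewrite E.
  move=> [E H]; right; exists p' => //; split=> //; lia.
case: z a1 a2 => [pz|] /adjE; last by move=> E; move: dp; rewrite E.
move=> [E1 H1]; case: y ne => [p'|] ne /adjE.
  move=> [E2 H2]; right; exists p' => //; split; first by rewrite -E2.
  have : dep p' != dep p.
    apply/eqP => E3; move: ne; rewrite (@sig_eq p p') ?eqxx //.
    by rewrite E1.
  move/eqP; lia.
move=> E2; left; split=> //; lia.
Qed.

Lemma beta_Some p : beta (Some p) = (Spre (leg p) + dep p).+1.
Proof. by []. Qed.

Lemma beta_inj : injective beta.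
Proof.
have key (p p' : {i : 'I_m & 'I_(l i)}) : leg p < leg p' -> beta (Some p) < beta (Some p').
  move=> lt; rewrite !beta_Some ltnS; apply: (leq_trans _ (leq_addr _ _)).
  by apply: leq_trans (S_mono lt); rewrite ltn_add2l dep_lt.
case=> [p|]; case=> [p'|] //.
- move=> E; congr Some; case: (ltngtP (leg p) (leg p')) => [lt|lt|eq].
  + by have := key _ _ lt; rewrite E ltnn.
  + by have := key _ _ lt; rewrite E ltnn.
  + have tE : leg p = leg p' by apply: val_inj.
    apply: sig_eq => //; move: E; rewrite !beta_Some tE => /eqP.
    by rewrite eqSS eqn_add2l => /eqP.
Qed.


Local Notation k := m.+2.
Definition win (v : T) := beta v %/ k.
Definition off (v : T) := beta v %% k.
Definition vdep (v : T) := if v is Some p then dep p else 0.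
Definition prio (v : T) :=
  if off v == 0 then 2 else if (off v == 1) || (vdep v == 1) then 1 else 0.
Definition Nn := (\sum_(i < m) l i).+1.
Definition rk (v : T) := match v with
  | None => 0
  | Some p => if dep p == 0 then (leg p).+1
              else m.+1 + (3 * win v + (2 - prio v)) * Nn + beta v end.
Definition istail (v : T) := 0 < vdep v.

Lemma beta_lt v : beta v < Nn.
Proof.
case: v => [p|] //; rewrite beta_Some /Nn ltnS.
by apply: leq_trans (S_bound (leg p)); rewrite ltn_add2l dep_lt.
Qed.

Lemma betaE v : beta v = win v * k + off v.
Proof. exact: divn_eq. Qed.

Lemma off_lt v : off v < k.
Proof. exact: ltn_pmod. Qed.

Lemma divmodE (x t o : nat) : o < k -> x = t * k + o -> x %/ k = t /\ x %% k = o.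
Proof.
move=> ok ->; split; first by rewrite divnMDl // divn_small // addn0.
by rewrite modnMDl modn_small.
Qed.

Lemma prio_le2 v : prio v <= 2.
Proof. by rewrite /prio; case: ifP => //; case: ifP. Qed.

Lemma rk_tail v : istail v -> rk v = m.+1 + (3 * win v + (2 - prio v)) * Nn + beta v.
Proof. by case: v => [p|] //; rewrite /istail /= => dp; rewrite /rk eqn0Ngt dp. Qed.

Lemma rk_nontail v : ~~ istail v -> rk v <= m.
Proof.
case: v => [p|] //; rewrite /istail /= -eqn0Ngt => /eqP dp.
by rewrite /rk dp eqxx ltn_ord.
Qed.

Lemma rk_lt_tail x y : istail x -> istail y ->
  3 * win x + (2 - prio x) < 3 * win y + (2 - prio y) -> rk x < rk y.
Proof.
move=> tx ty; rewrite (rk_tail tx) (rk_tail ty).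
have := beta_lt x; move: (3 * win x + _) (3 * win y + _) => A B bx lt.
have h1 : A.+1 * Nn <= B * Nn by rewrite leq_mul2r lt orbT.
move: h1; rewrite mulSn; move: (A * Nn) (B * Nn) => a b; lia.
Qed.

Lemma rk_nt_lt x y : ~~ istail x -> istail y -> rk x < rk y.
Proof. by move=> nx ty; rewrite (rk_tail ty); apply: leq_ltn_trans (rk_nontail nx) _; rewrite -addnA; exact: leq_addr. Qed.

Lemma rk_inj : injective rk.
Proof.
move=> x y E; case tx: (istail x); case ty: (istail y).
- apply: beta_inj; move: E; rewrite (rk_tail tx) (rk_tail ty) => E.
  have := beta_lt x; have := beta_lt y.
  case: (ltngtP (3 * win x + (2 - prio x)) (3 * win y + (2 - prio y))) => [lt|lt|eq].
  + by have := rk_lt_tail tx ty lt; rewrite (rk_tail tx) (rk_tail ty) E ltnn.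
  + by have := rk_lt_tail ty tx lt; rewrite (rk_tail tx) (rk_tail ty) E ltnn.
  + by move: E; rewrite eq => /eqP; rewrite !eqn_add2l => /eqP.
- by have := rk_nt_lt (negbT ty) tx; rewrite E ltnn.
- by have := rk_nt_lt (negbT tx) ty; rewrite E ltnn.
- move: E (negbT tx) (negbT ty); clear tx ty; case: x => [p|]; case: y => [p'|] //;
    rewrite /istail /= -?eqn0Ngt.
  + move=> E /eqP d1 /eqP d2; move: E; rewrite /rk d1 d2 eqxx => /eqP.
    rewrite eqSS => /eqP E; congr Some; apply: sig_eq; last by rewrite d1 d2.
    exact: val_inj.
  + by move=> E /eqP d1; move: E; rewrite /rk d1 eqxx.
  + by move=> E _ /eqP d1; move: E; rewrite /rk d1 eqxx.
Qed.


Definition W (t : nat) := [set w : T | win w == t].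
Definition C (v : T) :=
  [set w : T | (rk w < rk v) && (graph_square adj v w || (win w == win v))].

Lemma card_W t : #|W t| <= k.
Proof.
rewrite -[X in _ <= X](size_iota (t * k) k); apply: (@card_le_inj _ _ beta) => [x y _ _|x].
  exact: beta_inj.
by rewrite inE => /eqP wx; rewrite mem_iota betaE wx leq_addr /= ltn_add2l off_lt.
Qed.

Lemma same_win_down x y d : beta y + d = beta x -> d <= off x ->
  win y = win x /\ off y = off x - d.
Proof.
move=> E dle; have ok := off_lt x; have bx := betaE x.
apply: divmodE; first by apply: leq_ltn_trans ok; exact: leq_subr.
move: bx E; move: (win x * k) => P; lia.
Qed.

Lemma win_mono x y : beta x <= beta y -> win x <= win y.
Proof. by move=> h; apply: leq_div2r. Qed.

Lemma card_rk_lt N : #|[set w : T | rk w < N]| <= N.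
Proof.
rewrite -[X in _ <= X](size_iota 0 N); apply: (@card_le_inj _ _ rk) => [x y _ _|x].
  exact: rk_inj.
by rewrite inE mem_iota.
Qed.

Lemma card_C_nontail v : ~~ istail v -> #|C v| < k.
Proof.
move=> nv; apply: (@leq_ltn_trans (rk v)); last by apply: leq_ltn_trans (rk_nontail nv) _.
apply: leq_trans (card_rk_lt (rk v)); apply: subset_leq_card; apply/subsetP => w.
by rewrite !inE => /andP [].
Qed.


Lemma nbr_cases v w : istail v -> graph_square adj v w ->
  [\/ w = None /\ vdep v = 1, beta w + 1 = beta v,
      beta w + 2 = beta v /\ 2 <= vdep v | beta v < beta w /\ istail w].
Proof.
case: v => [p|] //; rewrite /istail /= => dp /(nbr_tail dp) [[-> d1]|[p' -> [E H]]].
  by constructor 1.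
rewrite !beta_Some E /=; case: H => [h|[h|[h|h]]].
- by constructor 2; lia.
- by constructor 3; split; lia.
- by constructor 4; split; lia.
- by constructor 4; split; lia.
Qed.

Lemma win_full t o : #|W t| = k -> o < k -> exists2 y, y \in W t & beta y = t * k + o.
Proof.
move=> full ok.
have u : uniq (map beta (enum (W t))) by rewrite map_inj_uniq ?enum_uniq //; exact: beta_inj.
have sub : {subset map beta (enum (W t)) <= iota (t * k) k}.
  move=> x /mapP [y]; rewrite mem_enum inE => /eqP wy ->.
  by rewrite mem_iota betaE wy leq_addr ltn_add2l off_lt.
have sz : size (iota (t * k) k) <= size (map beta (enum (W t))).
  by rewrite size_iota size_map -cardE full.
have [_ eqs] := uniq_min_size u sub sz.
have : t * k + o \in map beta (enum (W t)) by rewrite eqs mem_iota leq_addr ltn_add2l.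
by case/mapP => y; rewrite mem_enum => yW ->; exists y.
Qed.

Lemma L_consec px py : beta (Some py) = (beta (Some px)).+1 -> dep px <= 1 ->
  (leg py = leg px /\ dep py = (dep px).+1) \/ beta (Some px) <= 2 * m - 2.
Proof.
rewrite !beta_Some => E d1.
case: (ltngtP (leg px) (leg py)) => [lt|lt|eq].
- right; have h := S_mono lt; have hp := dep_lt px.
  have l2 : l (leg px) <= 2 by lia.
  have s2 := @S_le2 (leg px) (fun i hi => leq_trans (hsorted (ltnW hi)) l2).
  have lm := ltn_ord (leg py); lia.
- exfalso; have h := S_mono lt; have hp := dep_lt py; lia.
- left; have le : leg py = leg px by apply: val_inj.
  by split=> //; move: E; rewrite le; lia.
Qed.

Lemma Z t : 0 < t -> #|W t| = k -> exists2 z, z \in W t & istail z /\ prio z = 0.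
Proof.
move=> t0 full.
have tk : k <= t * k by rewrite leq_pmull.
have good y o : y \in W t -> beta y = t * k + o -> 2 <= o -> o < k -> 2 <= vdep y ->
    exists2 z, z \in W t & istail z /\ prio z = 0.
  move=> yW hby o2 ok d2; exists y => //; split; first by rewrite /istail; lia.
  have [_ oy] := divmodE ok hby.
  rewrite /prio /off oy; case: ifP => [/eqP|_]; first lia.
  by case: ifP => // /orP [/eqP|/eqP]; lia.
have ok0 : m.-1 < k by lia.
have ok1 : m < k by lia.
have ok2 : m.+1 < k by lia.
have [y0 W0 b0] := win_full full ok0.
have [y1 W1 b1] := win_full full ok1.
have [y2 W2 b2] := win_full full ok2.
case: (leqP 2 (vdep y0)) => [d0|d0]; first by apply: (good y0 m.-1) => //; lia.
case: (leqP 2 (vdep y1)) => [d1|d1]; first by apply: (good y1 m) => //; lia.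
case: (leqP 2 (vdep y2)) => [d2|d2]; first by apply: (good y2 m.+1) => //; lia.
exfalso; move: y0 y1 y2 W0 W1 W2 b0 b1 b2 d0 d1 d2.
case=> [p0|] ; last by move=> *; simpl in *; lia.
case=> [p1|] ; last by move=> *; simpl in *; lia.
case=> [p2|] ; last by move=> *; simpl in *; lia.
rewrite /vdep => _ _ _ b0 b1 b2 d0 d1 d2.
have e01 : beta (Some p1) = (beta (Some p0)).+1 by rewrite b0 b1; lia.
have e12 : beta (Some p2) = (beta (Some p1)).+1 by rewrite b1 b2; lia.
case: (L_consec e01 (ltnSE d0)) => [[g1 h1]|h1]; last by move: h1; rewrite b0; lia.
case: (L_consec e12 (ltnSE d1)) => [[g2 h2]|h2]; last by move: h2; rewrite b1; lia.
lia.
Qed.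


Lemma prio2 w : prio w = 2 -> off w = 0.
Proof. by rewrite /prio; case: ifP => [/eqP //|_]; case: ifP. Qed.

Lemma card_WD (A : {set T}) v : v \in A -> #|A :\ v| = #|A| - 1.
Proof. by move=> vW; rewrite (cardsD1 v A) vW add1n subSS subn0. Qed.

Lemma card_C_tail p : 0 < dep p -> #|C (Some p)| < k.
Proof.
move=> dp; set v := Some p.
have tv : istail v by [].
set t := win v.
have bv := betaE v; have ov := off_lt v.
have vW : v \in W t by rewrite inE.
have cW := card_W t.
have rk_later w : istail w -> 3 * t + (2 - prio v) < 3 * win w + (2 - prio w) -> w \notin C v.
  move=> tw lt; apply/negP; rewrite inE => /andP [h _].
  by have := rk_lt_tail tv tw lt; rewrite ltnNge ltnW.
have inC w : w \in C v -> rk w < rk v /\ (graph_square adj v w || (win w == t)).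
  by rewrite inE => /andP.
have Cneq w : w \in C v -> w != v.
  by move=> /inC [h _]; apply/eqP => E; move: h; rewrite E ltnn.
have tail_before w : w \in C v -> istail w -> 3 * win w + (2 - prio w) <= 3 * t + (2 - prio v).
  move=> wC tw; rewrite leqNgt; apply/negP => lt.
  by move: (rk_later w tw lt); rewrite wC.
have N4_contra w : w \in C v -> beta v < beta w -> istail w -> win w != t -> False.
  move=> wC lt tw ne; have := win_mono (ltnW lt); rewrite -/t => le.
  have lt2 : t < win w by rewrite ltn_neqAle eq_sym ne le.
  have := prio_le2 v; have := prio_le2 w => p1 p2.
  have h2 : 3 * t + (2 - prio v) < 3 * win w + (2 - prio w) by lia.
  by move: (rk_later w tw h2); rewrite wC.
have [o0|o0] := altP (off v =P 0).
  have pv : prio v = 2 by rewrite /prio o0.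
  have t0 : 0 < t by move: bv; rewrite o0 addn0 -/t; case: (t) => //.
  pose Q := [set w : T | if w is Some p' then (dep p' == 0) && (leg p' != leg p) else false].
  pose P := [set w : T | (beta w + 1 == beta v) ||
                         (if dep p == 1 then w == None else beta w + 2 == beta v)].
  have cQ : #|Q| <= m.-1.
    apply: (@leq_trans (size (rem (val (leg p)) (iota 0 m)))); last first.
      by rewrite size_rem ?mem_iota ?add0n ?ltn_ord // size_iota.
    apply: (@card_le_inj _ _ (fun w : T => if w is Some p' then val (leg p') else 0)) => [x y|x].
      case: x => [px|]; case: y => [py|]; rewrite !inE //.
      move=> /andP [/eqP dx _] /andP [/eqP dy _] /= E; congr Some; apply: sig_eq.
        exact: val_inj.
      by rewrite dx dy.
    case: x => [px|]; rewrite inE // => /andP [_ ne] /=.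
    rewrite (mem_rem_uniq _ (iota_uniq 0 m)) !inE mem_iota add0n ltn_ord leq0n !andbT.
    exact: ne.
  have cP : #|P| <= 2.
    rewrite -[2]/(size [:: (beta v).-1; if dep p == 1 then 0 else beta v - 2]).
    apply: (@card_le_inj _ _ beta) => [x y _ _|x]; first exact: beta_inj.
    rewrite inE => /orP [/eqP h|]; first by rewrite inE -h addn1 eqxx.
    by case: ifP => _ => [/eqP ->|/eqP <-]; rewrite !inE ?eqxx ?orbT // addnK eqxx orbT.
  have inP w : graph_square adj v w -> ~ (beta v < beta w) -> w \in P.
    move=> sq nlt; rewrite inE; case: (nbr_cases tv sq) => [[-> d1]|h|[h d2]|[h _]].
    - by move: d1 => /= ->; rewrite eqxx orbT.
    - by rewrite h eqxx.
    - rewrite ifN; first by rewrite h eqxx orbT.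
      by move: d2 => /=; case: (dep p) => [|[|]].
    - by case: nlt.
  have sub : C v \subset Q :|: P.
    apply/subsetP => w wC; have [rw hw] := inC w wC; rewrite in_setU.
    case tw: (istail w).
      have A := tail_before w wC tw; rewrite pv in A.
      have wlt : win w < t.
        case: (ltngtP (win w) t) => [//|gt|eq]; first lia.
        have p2 : prio w = 2 by have := prio_le2 w; lia.
        have := prio2 p2 => ow.
        have bw : beta w = beta v by rewrite betaE bv ow o0 eq.
        by move: (Cneq w wC); rewrite (beta_inj bw) eqxx.
      move: hw; rewrite (ltn_eqF wlt) orbF => sq.
      apply/orP; right; apply: inP => // lt.
      by have := win_mono (ltnW lt); rewrite -/t leqNgt wlt.
    move: tw wC rw hw; case: w => [p'|] tw wC rw hw; last first.
      move: hw; rewrite /win /= div0n eq_sym (negbTE (lt0n_neq0 t0)) orbF => sq.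
      by apply/orP; right; apply: inP.
    have d0 : dep p' = 0 by move: tw; rewrite /istail /=; case: (dep p').
    case: (eqVneq (leg p') (leg p)) => [lg|lg]; last by rewrite inE d0 eqxx lg.
    have blt : beta (Some p') < beta v by rewrite /v !beta_Some lg d0; lia.
    case/orP: hw => [sq|/eqP wt].
      by apply/orP; right; apply: inP => // h; move: blt; rewrite ltnNge ltnW.
    exfalso; move: blt; rewrite bv o0 addn0 -/t -wt.
    by rewrite /win ltnNge leq_divM.
  apply: (leq_ltn_trans (subset_leq_card sub)).
  apply: (leq_ltn_trans (leq_card_setU Q P).1); lia.
have [c1|c1] := boolP ((off v == 1) || (dep p == 1)).
  have pv : prio v = 1 by rewrite /prio (negbTE o0) /= c1.
  pose E := [set w : T | if dep p == 1 then w == None else beta w + 2 == beta v].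
  have cE : #|E| <= 1.
    rewrite -[1]/(size [:: if dep p == 1 then 0 else beta v - 2]).
    apply: (@card_le_inj _ _ beta) => [x y _ _|x]; first exact: beta_inj.
    by rewrite inE; case: ifP => _ => [/eqP ->|/eqP <-]; rewrite !inE ?addnK.
  have subA : C v \subset (W t :\ v) :|: E.
    apply/subsetP => w wC; have [rw hw] := inC w wC; rewrite in_setU in_setD1 (Cneq w wC) /=.
    case/orP: hw => [sq|wt]; last by rewrite inE wt.
    case: (eqVneq (win w) t) => [wt|ne]; first by rewrite inE wt eqxx.
    case: (nbr_cases tv sq) => [[-> d1]|h|[h d2]|[h tw]].
    - by move: d1 => /= d1; rewrite !inE d1 eqxx orbT.
    - have o1 : 1 <= off v by rewrite lt0n.
      have [ww _] := same_win_down h o1.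
      by move: ne; rewrite ww eqxx.
    - have dn : dep p != 1 by move: d2 => /=; case: (dep p) => [|[|]].
      by rewrite !inE (negbTE dn) h eqxx orbT.
    - by case: (N4_contra w wC h tw ne).
  have [t00|t0] := eqVneq t 0.
    have sub : C v \subset W t :\ v.
      apply/subsetP => w wC; move/subsetP: subA => /(_ w wC); rewrite in_setU => /orP [//|].
      have hbv : beta v < k by rewrite bv -/t t00 mul0n add0n.
      rewrite inE in_setD1 inE => hE.
      have hb : beta w < beta v.
        move: hE; case: ifP => _ => [/eqP ->|/eqP <-]; last by lia.
        by [].
      apply/andP; split.
        by apply/eqP => E0; move: hb; rewrite E0 ltnn.
      by rewrite /win divn_small ?t00 // (ltn_trans hb hbv).
    apply: (leq_ltn_trans (subset_leq_card sub)); rewrite card_WD //; lia.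
  have [full|nfull] := eqVneq #|W t| k; last first.
    apply: (leq_ltn_trans (subset_leq_card subA)).
    apply: (leq_ltn_trans (leq_card_setU _ _).1); rewrite card_WD //.
    have : #|W t| < k by rewrite ltn_neqAle nfull cW.
    lia.
  have t1 : 0 < t by rewrite lt0n.
  have [z zW [tz pz]] := Z t1 full.
  have zC : z \notin C v.
    apply: rk_later => //; move: zW; rewrite inE => /eqP ->; rewrite pz pv; lia.
  have zv : z != v by apply/eqP => E0; move: pz; rewrite E0 pv.
  have sub : C v \subset ((W t :\ v) :\ z) :|: E.
    apply/subsetP => w wC; move/subsetP: subA => /(_ w wC); rewrite !in_setU => /orP [h|->].
      rewrite in_setD1 h andbT; apply/orP; left; apply/eqP => E0; move: zC; rewrite -E0 wC.
      by [].
    by rewrite orbT.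
  apply: (leq_ltn_trans (subset_leq_card sub)).
  apply: (leq_ltn_trans (leq_card_setU _ _).1).
  have zWv : z \in W t :\ v by rewrite in_setD1 zv zW.
  rewrite (card_WD zWv) card_WD // full; lia.
have o2 : 2 <= off v by move: o0 c1; case: (off v) => [|[|]].
have d2 : 2 <= dep p.
  by move: c1; rewrite negb_or => /andP [_ d1]; move: dp d1; case: (dep p) => [|[|]].
have sub : C v \subset W t :\ v.
  apply/subsetP => w wC; have [rw hw] := inC w wC; rewrite in_setD1 (Cneq w wC) /= inE.
  case/orP: hw => [sq|//].
  case: (eqVneq (win w) t) => [//|ne].
  case: (nbr_cases tv sq) => [[_ d1]|h|[h _]|[h tw]].
  - by move: d2 d1 => /= d2 d1; move: d2; rewrite d1.
  - have [ww _] := same_win_down h (ltnW o2).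
    by move: ne; rewrite ww eqxx.
  - have [ww _] := same_win_down h o2.
    by move: ne; rewrite ww eqxx.
  - by case: (N4_contra w wC h tw ne).
apply: (leq_ltn_trans (subset_leq_card sub)); rewrite card_WD //; lia.
Qed.


Lemma count_ok v :
  #|[set w | (rk w < rk v) && (graph_square adj v w || (win w == win v))]| < k.
Proof.
case tv: (istail v); last exact: card_C_nontail (negbT tv).
by case: v tv => [p|] // dp; exact: card_C_tail.
Qed.

Lemma card_T : #|T| = Nn.
Proof.
rewrite /spider_vertex card_option card_tagged sumnE big_map big_enum /Nn /=.
by congr _.+1; apply: eq_bigr => i _; rewrite card_ord.
Qed.

Lemma win_lt v : win v < ceil_div #|T| k.
Proof.
rewrite /ceil_div card_T /win.
have bl := beta_lt v.
have -> : Nn + k.-1 = 1 * k + Nn.-1 by rewrite /Nn /=; lia.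
rewrite divnMDl // add1n ltnS; apply: leq_div2r; rewrite /Nn in bl *; lia.
Qed.

Lemma sq_sym : symmetric (graph_square adj).
Proof.
have asym : symmetric adj by move=> x y; rewrite /spider_adj orbC.
move=> x y; rewrite /graph_square eq_sym (asym x y); congr (_ && (_ || _)).
by apply/existsP/existsP => [[z /andP [a b]]|[z /andP [a b]]]; exists z;
  rewrite asym b asym a.
Qed.

Lemma sq_irr : irreflexive (graph_square adj).
Proof. by move=> x; rewrite /graph_square eqxx. Qed.

End Spider.

Theorem lemma2p4 (m : nat) (l : 'I_m -> nat)
    (hm : 3 <= m)
    (hpos : forall i, 0 < l i)
    (hsorted : forall i j : 'I_m, i <= j -> l i <= l j) :
  equitably_choosable (graph_square (@spider_adj m l)) m.+2.
Proof.
move=> L kL.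
have [f [fL [fC fcl]]] := @greedy _ _ _ (ceil_div #|spider_vertex l| m.+2) L
   (@sq_sym m l) (@sq_irr m l) kL (@win m l) (@rk m l) (@rk_inj m l hm)
   (@win_lt m l hm) (@count_ok m l hm hsorted).
by exists f.
Qed.
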